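(* In the setting of the context, assume the matrix representing $A$ with respect to the fixed feasible basis has constant row sum $\theta_r$ (i.e. $c_i+a_i+b_i=\theta_r$ for $0\le i\le d$), where $\theta_r$ is an eigenvalue of $A$. Let $s\in\{0,\dots,d\}$ with $s\ne r$. The following are equivalent: (i) in $\Delta$, vertex $r$ is adjacent to vertex $s$ and to no other vertex; (ii) $a^*_r\ne\theta^*_0$ and $$u_i(\theta_s)=\frac{\theta^*_i-a^*_r}{\theta^*_0-a^*_r}\qquad(0\le i\le d).$$
   Context: Let $\mathbb F$ be a field, $d\ge1$, $V$ an $\mathbb F$-vector space of dimension $d+1$, $\mathcal A=\mathrm{End}(V)$ with identity $I$. Let $E^*_0,\dots,E^*_d\in\mathcal A$ satisfy $E^*_iE^*_j=\delta_{i,j}E^*_i$, $\mathrm{rank}(E^*_i)=1$. Let $A\in\mathcal A$ satisfy $E^*_iAE^*_j=0$ if $|i-j|>1$ and $\neq0$ if $|i-j|=1$. Assume $A$ has $d+1$ distinct eigenvalues $\theta_0,\dots,\theta_d\in\mathbb F$ with primitive idempotents $E_i=\prod_{j\ne i}\frac{A-\theta_jI}{\theta_i-\theta_j}$. Let $\theta^*_i\in\mathbb F$, $A^*=\sum_i\theta^*_iE^*_i$, $a^*_i=\mathrm{tr}(E_iA^* )$. Let $\Delta$ be the graph on $\{0,\dots,d\}$ with $i\sim j$ iff $i\ne j$ and $E_iA^*E_j\ne0$. A basis $v_0,\dots,v_d$ of $V$ is feasible if $v_i\in E^*_iV$ for all $i$; fix one. Then $Av_i=b_{i-1}v_{i-1}+a_iv_i+c_{i+1}v_{i+1}$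 ($v_{-1}=v_{d+1}=0$), with $a_i=\mathrm{tr}(E^*_iA)$, nonzero $b_0,\dots,b_{d-1}$, $c_1,\dots,c_d$, and $b_d=c_0=0$. Define $u_0,\dots,u_{d+1}\in\mathbb F[\lambda]$ by $u_{-1}=0$, $u_0=1$, $\lambda u_i=c_iu_{i-1}+a_iu_i+b_iu_{i+1}$ $(0\le i\le d-1)$, $\lambda u_d=c_du_{d-1}+a_du_d+u_{d+1}/(b_0\cdots b_{d-1})$. *)

(* Defs.v *)
From HB Require Import structures.
From mathcomp Require Import all_boot all_order all_algebra.
Set Implicit Arguments. Unset Strict Implicit. Unset Printing Implicit Defensive.
Import Order.TTheory GRing.Theory Num.Theory.
Local Open Scope ring_scope.

(* V = column vectors 'cV[F]_(d.+1), End(V) = 'M[F]_(d.+1).  Scalar sequences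
   and families indexed 0..d are given as functions on nat (values outside
   0..d are irrelevant). *)

Definition primIdem (F : fieldType) (d : nat) (A : 'M[F]_d.+1) (theta : nat -> F)
  (i : nat) : 'M[F]_d.+1 :=
  \prod_(j < d.+1 | (j : nat) != i) ((theta i - theta j)^-1 *: (A - (theta j)%:M)).

Definition dualA (F : fieldType) (d : nat) (Es : nat -> 'M[F]_d.+1) (thst : nat -> F)
  : 'M[F]_d.+1 := \sum_(i < d.+1) thst i *: Es i.

Definition astar (F : fieldType) (d : nat) (A : 'M[F]_d.+1) (theta : nat -> F)
  (Es : nat -> 'M[F]_d.+1) (thst : nat -> F) (i : nat) : F :=
  \tr (primIdem A theta i *m dualA Es thst).

Definition DeltaAdj (F : fieldType) (d : nat) (A : 'M[F]_d.+1) (theta : nat -> F)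
  (Es : nat -> 'M[F]_d.+1) (thst : nat -> F) (i j : nat) : Prop :=
  i <> j /\ primIdem A theta i *m dualA Es thst *m primIdem A theta j <> 0.

(* (u_n, u_{n+1}) for the recurrence u_{-1} = 0, u_0 = 1,
   lambda u_i = c_i u_{i-1} + a_i u_i + b_i u_{i+1}  (used for 0 <= i <= d-1). *)
Fixpoint u_aux (F : fieldType) (a b c : nat -> F) (n : nat) : {poly F} * {poly F} :=
  match n with
  | 0 => (1, (b 0)^-1 *: ('X - (a 0)%:P))
  | m.+1 => let: (p, q) := u_aux a b c m in
            (q, (b m.+1)^-1 *: (('X - (a m.+1)%:P) * q - c m.+1 *: p))
  end.

Definition upoly (F : fieldType) (a b c : nat -> F) (n : nat) : {poly F} :=
  (u_aux a b c n).1.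

(* Main.v *)
Require Import Defs.
From HB Require Import structures.
From mathcomp Require Import all_boot all_order all_algebra.
From mathcomp Require Import zify ring.
Import Order.TTheory GRing.Theory Num.Theory.
Set Implicit Arguments. Unset Strict Implicit. Unset Printing Implicit Defensive.
Local Open Scope ring_scope.

Lemma sum_delta (V : zmodType) (n m : nat) (G : nat -> V) :
  \sum_(k < n) (if (k : nat) == m then G k else 0) = if (m < n)%N then G m else 0.
Proof.
case: ltnP => hm.
  rewrite (bigD1 (Ordinal hm)) //= eqxx big1 ?addr0 // => k hk.
  case: eqP => // ek; case/eqP: hk; exact: val_inj.
rewrite big1 // => k _; case: eqP => // ek.
by move: (ltn_ord k); rewrite ek ltnNge hm.
Qed.

Lemma col_diag (F : fieldType) n (X W : 'M[F]_n) (f : 'I_n -> F) :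
  (forall j, X *m col j W = f j *: col j W) -> X *m W = W *m diag_mx (\row_j f j).
Proof.
move=> H; apply/matrixP => i j; have := congr1 (fun y : 'cV_n => y i 0) (H j).
rewrite mul_mx_diag !mxE mulrC => <-; apply: eq_bigr => k _; by rewrite !mxE.
Qed.

Lemma prod_act (F : fieldType) n m (y : 'cV[F]_n.+1) (P : pred 'I_m)
  (f : 'I_m -> 'M[F]_n.+1) (g : 'I_m -> F) :
  (forall j, P j -> f j *m y = g j *: y) ->
  (\prod_(j | P j) f j) *m y = (\prod_(j | P j) g j) *: y.
Proof.
move=> H; apply: (big_rec2 (fun X c => X *m y = c *: y)); first by rewrite mul1mx scale1r.
move=> j X c Pj IH; rewrite -mulmxE -mulmxA IH -scalemxAr H // scalerA mulrC //.
Qed.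

Lemma mul_col (F : fieldType) n (P : 'M[F]_n) (y : 'cV_n) :
  P *m y = \sum_k y k 0 *: col k P.
Proof.
apply/matrixP => i j; rewrite !mxE summxE; apply: eq_bigr => k _.
by rewrite !mxE (ord1 j) mulrC.
Qed.

Definition Dl {F : fieldType} {n} (i : 'I_n) : 'M[F]_n := diag_mx (\row_k ((k == i)%:R : F)).

Lemma Dl_entry (F : fieldType) n (i j : 'I_n) (X : 'M[F]_n) :
  Dl i *m X *m Dl j = \matrix_(k, l) ((k == i)%:R * X k l * (l == j)%:R).
Proof. by apply/matrixP => k l; rewrite mul_mx_diag mul_diag_mx !mxE. Qed.

Lemma Dl_eq0 (F : fieldType) n (i j : 'I_n) (X : 'M[F]_n) :
  (Dl i *m X *m Dl j == 0) = (X i j == 0).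
Proof.
rewrite Dl_entry; apply/eqP/eqP => [H|H].
  by have := congr1 (fun Y : 'M_n => Y i j) H; rewrite !mxE !eqxx mulr1 mul1r.
apply/matrixP => k l; rewrite !mxE.
by case: (eqVneq k i) => [->|]; case: (eqVneq l j) => [->|] //; rewrite ?H ?mulr0 ?mul0r.
Qed.

Definition Mf {F : fieldType} (a b c : nat -> F) (i j : nat) : F :=
  (if j == i.+1 then b i else 0) + (if j == i then a i else 0)
  + (if j.+1 == i then c i else 0).
Definition Mt {F : fieldType} d (a b c : nat -> F) : 'M[F]_d.+1 :=
  \matrix_(i, j) Mf a b c i j.

Lemma Mt_row (F : fieldType) d (a b c : nat -> F) (x : 'cV[F]_d.+1) (i : 'I_d.+1) :
  (Mt d a b c *m x) i 0 =
  (if (i.+1 < d.+1)%N then b i * x (inord i.+1) 0 else 0) + a i * x (inord i) 0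
  + (if (i : nat) is i'.+1 then c i * x (inord i') 0 else 0).
Proof.
rewrite mxE.
transitivity (\sum_(k < d.+1)
  ((if (k : nat) == i.+1 then b i * x (inord k) 0 else 0)
   + (if (k : nat) == i then a i * x (inord k) 0 else 0)
   + (if (i : nat) is i'.+1 then (if (k : nat) == i' then c i * x (inord k) 0 else 0) else 0))).
  apply: eq_bigr => k _; rewrite mxE /Mf inord_val !mulrDl.
  case: (nat_of_ord i) => [|i'].
    by case: (_ == _); case: (_ == _); rewrite ?mul0r.
  by rewrite eqSS; case: (_ == _); case: (_ == _); case: (_ == _); rewrite ?mul0r.
rewrite !big_split /= (sum_delta _ _ (fun k => b i * x (inord k) 0))
  (sum_delta _ _ (fun k => a i * x (inord k) 0)) ltn_ord.
case: i => [[|i'] hi] //=; first by rewrite big1 // => k _ .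
by rewrite (sum_delta _ _ (fun k => c i'.+1 * x (inord k) 0)) (ltnW hi).
Qed.

Lemma Mt_col (F : fieldType) d (a b c : nat -> F) (P : 'M[F]_d.+1) (j : 'I_d.+1) :
  P *m col j (Mt d a b c) =
  (if (j : nat) is j'.+1 then b j' *: col (inord j') P else 0) + a j *: col (inord j) P
  + (if (j.+1 < d.+1)%N then c j.+1 *: col (inord j.+1) P else 0).
Proof.
rewrite mul_col.
transitivity (\sum_(k < d.+1)
  ((if (j : nat) is j'.+1 then (if (k : nat) == j' then b k *: col (inord k) P else 0) else 0)
   + (if (k : nat) == j then a k *: col (inord k) P else 0)
   + (if (k : nat) == j.+1 then c k *: col (inord k) P else 0))).
  apply: eq_bigr => k _; rewrite !mxE /Mf inord_val !scalerDl.
  case: k => /= k hk; case: j => /= [[|j'] hj].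
    rewrite (_ : (0 == k.+1)%N = false) // (eq_sym 0%N k) (eq_sym 1%N k).
    by case: (k == 0)%N; case: (k == 1)%N; rewrite ?scale0r.
  rewrite eqSS [j' == k]eq_sym [j'.+1 == k]eq_sym [j'.+2 == k]eq_sym.
  by case: (k == j')%N; case: (k == j'.+1)%N; case: (k == j'.+2)%N; rewrite ?scale0r.
rewrite !big_split /= (sum_delta _ _ (fun k => a k *: col (inord k) P))
  (sum_delta _ _ (fun k => c k *: col (inord k) P)) ltn_ord.
case: j => [[|j'] hj] //=; first by rewrite big1 // => k _ .
by rewrite (sum_delta _ _ (fun k => b k *: col (inord k) P)) (ltnW hj).
Qed.

Lemma upoly0 (F : fieldType) (a b c : nat -> F) : upoly a b c 0 = 1.
Proof. by []. Qed.

Lemma upoly1 (F : fieldType) (a b c : nat -> F) :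
  upoly a b c 1 = (b 0%N)^-1 *: ('X - (a 0%N)%:P).
Proof. by []. Qed.

Lemma upolySS (F : fieldType) (a b c : nat -> F) m :
  upoly a b c m.+2 = (b m.+1)^-1 *: (('X - (a m.+1)%:P) * upoly a b c m.+1
                                       - c m.+1 *: upoly a b c m).
Proof. by rewrite /upoly /=; case: (u_aux a b c m). Qed.

Lemma eig_u (F : fieldType) d (a b c : nat -> F) (x : 'cV[F]_d.+1) t :
  (1 <= d)%N -> (forall i, (i < d)%N -> b i != 0) ->
  Mt d a b c *m x = t *: x ->
  forall i, (i <= d)%N -> x (inord i) 0 = x (inord 0) 0 * (upoly a b c i).[t].
Proof.
move=> hd hb hx.
have R : forall i, (i <= d)%N ->
  (if (i.+1 < d.+1)%N then b i * x (inord i.+1) 0 else 0) + a i * x (inord i) 0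
  + (if i is i'.+1 then c i * x (inord i') 0 else 0) = t * x (inord i) 0.
  move=> i hi; have := congr1 (fun y : 'cV_d.+1 => y (inord i) 0) hx.
  by rewrite Mt_row !mxE inordK.
have aux : forall m, (m < d)%N ->
  x (inord m) 0 = x (inord 0) 0 * (upoly a b c m).[t] /\
  x (inord m.+1) 0 = x (inord 0) 0 * (upoly a b c m.+1).[t].
  elim=> [|m IH] hm.
    split; first by rewrite upoly0 hornerE mulr1.
    have := R 0%N (leq0n _); rewrite ltnS hd addr0 => E.
    rewrite upoly1 hornerZ hornerXsubC; apply: (mulfI (hb 0%N hm)).
    have -> : b 0%N * x (inord 1) 0 = t * x (inord 0) 0 - a 0%N * x (inord 0) 0.
      by rewrite -E addrK.
    field; exact: hb.
  have [IH1 IH2] := IH (ltnW hm); split => //.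
  have := R m.+1 (ltnW hm); rewrite ltnS hm => E.
  rewrite upolySS hornerZ hornerD hornerN hornerM hornerXsubC hornerZ; apply: (mulfI (hb _ hm)).
  have -> : b m.+1 * x (inord m.+2) 0 =
     t * x (inord m.+1) 0 - a m.+1 * x (inord m.+1) 0 - c m.+1 * x (inord m) 0.
    by rewrite -E; ring.
  rewrite IH1 IH2; field; exact: hb.
move=> i hi; case: i hi => [|i] hi; first by rewrite upoly0 hornerE mulr1.
by have [] := aux i hi.
Qed.

Lemma conj0 (F : fieldType) n (P X : 'M[F]_n) :
  P \in unitmx -> (P *m X *m invmx P == 0) = (X == 0).
Proof.
move=> Pu; apply/eqP/eqP => [H|->]; last by rewrite mulmx0 mul0mx.
have := congr1 (fun Y => invmx P *m Y *m P) H.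
by rewrite !mulmxA mulVmx // mul1mx mulmxKV // mulmx0 mul0mx.
Qed.

Lemma ker_unit (F : fieldType) n (X : 'M[F]_n) :
  (forall y : 'cV_n, X *m y = 0 -> y = 0) -> X \in unitmx.
Proof.
move=> H; rewrite -unitmx_tr -row_free_unit -kermx_eq0.
apply/negPn/negP => /rowV0Pn [z]; rewrite sub_kermx => /eqP hz nz.
have : X *m z^T = 0 by rewrite -[X]trmxK -trmx_mul hz trmx0.
move/H => /(congr1 trmx); rewrite trmxK trmx0 => z0.
by move: nz; rewrite z0 eqxx.
Qed.

Lemma colmul (F : fieldType) m n p (X : 'M[F]_(m, n)) (W : 'M[F]_(n, p)) j :
  col j (X *m W) = X *m col j W.
Proof. by rewrite !colE mulmxA. Qed.

Lemma col_of_diag (F : fieldType) n (X W : 'M[F]_n) (dd : 'rV_n) j :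
  X *m W = W *m diag_mx dd -> X *m col j W = dd 0 j *: col j W.
Proof.
move=> H; rewrite -colmul H; apply/matrixP => i k.
by rewrite mul_mx_diag !mxE mulrC.
Qed.

Lemma sumo_delta (V : zmodType) n (R : 'I_n) (G : 'I_n -> V) :
  \sum_k (if k == R then G k else 0) = G R.
Proof. by rewrite -big_mkcond big_pred1_eq. Qed.

Lemma right_eig (F : fieldType) n (A : 'M[F]_n) t :
  eigenvalue A t -> exists2 z : 'cV_n, A *m z = t *: z & z != 0.
Proof.
move=> He.
have nu : (A - t%:M)^T \notin unitmx.
  rewrite unitmx_tr -row_free_unit -kermx_eq0; exact: He.
have : kermx (A - t%:M)^T != 0 by rewrite kermx_eq0 row_free_unit.
case/rowV0Pn => z; rewrite sub_kermx => /eqP hz nz.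
exists z^T; last by apply: contra nz => /eqP/(congr1 trmx); rewrite trmxK trmx0 => ->.
have : (A - t%:M) *m z^T = 0 by rewrite -[A - _]trmxK -trmx_mul hz trmx0.
by rewrite mulmxBl mul_scalar_mx => /eqP; rewrite subr_eq0 => /eqP.
Qed.

Lemma tr_Dl (F : fieldType) n (R : 'I_n) (N : 'M[F]_n) : \tr (Dl R *m N) = N R R.
Proof.
rewrite /mxtrace (bigD1 R) //= big1 ?addr0.
  by rewrite mul_diag_mx !mxE eqxx mul1r.
by move=> k /negbTE hk; rewrite mul_diag_mx !mxE hk mul0r.
Qed.

Lemma conj_tr (F : fieldType) n (W X : 'M[F]_n) :
  W \in unitmx -> \tr (W *m X *m invmx W) = \tr X.
Proof. by move=> Wu; rewrite mxtrace_mulC mulmxA mulVmx // mul1mx. Qed.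

Lemma colP_eq (F : fieldType) m n (X Y : 'M[F]_(m, n)) :
  (forall j, col j X = col j Y) -> X = Y.
Proof.
move=> H; apply/matrixP => i j; by move: (congr1 (fun z : 'cV_m => z i 0) (H j)); rewrite !mxE.
Qed.

Fixpoint kseq {F : fieldType} (b c : nat -> F) (i : nat) : F :=
  if i is i'.+1 then kseq b c i' * b i' / c i else 1.

Lemma kseq_nz (F : fieldType) d (b c : nat -> F) :
  (forall i, (i < d)%N -> b i != 0) -> (forall i, (i < d)%N -> c i.+1 != 0) ->
  forall i, (i <= d)%N -> kseq b c i != 0.
Proof.
move=> hb hc; elim=> [|i IH] hi /=; first exact: oner_neq0.
rewrite mulf_neq0 ?invr_neq0 ?hc ?mulf_neq0 ?hb ?IH //; exact: ltnW.
Qed.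

Lemma Mf_sym (F : fieldType) d (a b c : nat -> F) (i j : nat) :
  (forall i, (i < d)%N -> c i.+1 != 0) -> (i <= d)%N -> (j <= d)%N ->
  Mf a b c j i * kseq b c j = kseq b c i * Mf a b c i j.
Proof.
move=> hc hi hj; rewrite /Mf.
case: (eqVneq j i.+1) => [ej|h1]; first subst j.
  have e1 : (i == i.+2)%N = false by lia.
  have e2 : (i == i.+1)%N = false by lia.
  have e3 : (i.+1 == i)%N = false by lia.
  have e4 : (i.+2 == i)%N = false by lia.
  have hci : c i.+1 != 0 by apply: hc; lia.
  rewrite e1 e2 e3 e4 ?eqxx /= !add0r !addr0; field; exact: hci.
case: (eqVneq i j.+1) => [ei|h2]; first subst i.
  have e1 : (j == j.+2)%N = false by lia.
  have e2 : (j == j.+1)%N = false by lia.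
  have e3 : (j.+1 == j)%N = false by lia.
  have e4 : (j.+2 == j)%N = false by lia.
  have hcj : c j.+1 != 0 by apply: hc; lia.
  rewrite ?e1 ?e2 ?e3 ?e4 ?eqxx /= ?add0r ?addr0; field; exact: hcj.
have e5 : (i.+1 == j)%N = false by apply/negbTE; rewrite eq_sym.
have e6 : (j.+1 == i)%N = false by apply/negbTE; rewrite eq_sym.
rewrite ?e5 ?e6 (eq_sym i j).
case: eqP => [->|_]; rewrite ?add0r ?addr0 ?mulr0 ?mul0r //.
by rewrite mulrC.
Qed.

Lemma MK (F : fieldType) d (a b c : nat -> F) :
  (forall i, (i < d)%N -> c i.+1 != 0) ->
  (Mt d a b c)^T *m diag_mx (\row_i kseq b c i) =
  diag_mx (\row_i kseq b c i) *m Mt d a b c.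
Proof.
move=> hc; apply/matrixP => i j.
rewrite mul_mx_diag mul_diag_mx !mxE; apply: (@Mf_sym F d) => //; rewrite -ltnS; exact: ltn_ord.
Qed.

Lemma sumo_delta_mul (F : fieldType) n (i0 : 'I_n) (f : 'I_n -> F) (x : F) :
  \sum_k f k * (if k == i0 then x else 0) = f i0 * x.
Proof.
rewrite -(sumo_delta i0 (fun k => f k * x)); apply: eq_bigr => k _.
by case: eqP; rewrite ?mulr0.
Qed.

Unset Implicit Arguments.

Theorem proposition8p3 (F : fieldType) (d : nat) (hd : (1 <= d)%N)
  (Es : nat -> 'M[F]_d.+1) (A : 'M[F]_d.+1) (theta thst : nat -> F)
  (v : nat -> 'cV[F]_d.+1) (a b c : nat -> F) (r s : nat)
  (hEs : forall i j, (i <= d)%N -> (j <= d)%N ->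
           Es i *m Es j = if i == j then Es i else 0)
  (hrk : forall i, (i <= d)%N -> \rank (Es i) = 1%N)
  (hA0 : forall i j, (i <= d)%N -> (j <= d)%N -> (1 < `|i%:Z - j%:Z|)%N ->
           Es i *m A *m Es j = 0)
  (hA1 : forall i j, (i <= d)%N -> (j <= d)%N -> `|i%:Z - j%:Z|%N = 1%N ->
           Es i *m A *m Es j != 0)
  (htheta_eig : forall i, (i <= d)%N -> eigenvalue A (theta i))
  (htheta_inj : forall i j, (i <= d)%N -> (j <= d)%N -> theta i = theta j -> i = j)
  (hv_basis : (\matrix_(k < d.+1, j < d.+1) v j k ord0) \in unitmx)
  (hv_feas : forall i, (i <= d)%N -> exists w : 'cV[F]_d.+1, v i = Es i *m w)
  (hAv : forall i, (i <= d)%N ->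
           A *m v i = (if i is k.+1 then b k *: v k else 0) + a i *: v i
                      + (if (i < d)%N then c i.+1 *: v i.+1 else 0))
  (hb_d : b d = 0) (hc_0 : c 0%N = 0)
  (hr : (r <= d)%N)
  (hrow : forall i, (i <= d)%N -> c i + a i + b i = theta r)
  (hs : (s <= d)%N) (hsr : s <> r) :
  (forall j, (j <= d)%N -> (DeltaAdj A theta Es thst r j <-> j = s))
  <->
  (astar A theta Es thst r <> thst 0%N /\
   forall i, (i <= d)%N ->
     (upoly a b c i).[theta s] =
       (thst i - astar A theta Es thst r) / (thst 0%N - astar A theta Es thst r)).
Proof.
pose P : 'M[F]_d.+1 := \matrix_(k < d.+1, j < d.+1) v j k ord0.
have Pu : P \in unitmx by [].
have colP : forall j : 'I_d.+1, col j P = v j.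
  by move=> j; apply/matrixP => k l; rewrite !mxE (ord1 l).
have colPn : forall m, (m <= d)%N -> col (inord m) P = v m.
  by move=> m hm; rewrite colP inordK.
have EsV : forall i j, (i <= d)%N -> (j <= d)%N ->
    Es i *m v j = if i == j then v j else 0.
  move=> i j hi hj; case: (hv_feas j hj) => w ->; rewrite mulmxA hEs //.
  by case: eqP => [->|]; rewrite ?mul0mx.
have ordle : forall j : 'I_d.+1, (j <= d)%N by move=> j; rewrite -ltnS.
have eqI : forall (j : 'I_d.+1) i, (i <= d)%N -> (j == inord i) = (i == j :> nat).
  by move=> j i hi; rewrite -(inj_eq val_inj) /= inordK // eq_sym.
have EsP : forall i, (i <= d)%N -> Es i *m P = P *m Dl (inord i).
  move=> i hi; apply: col_diag => j; rewrite colP EsV // eqI //.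
  by case: eqP => _; rewrite ?scale1r ?scale0r.
have AP : A *m P = P *m Mt d a b c.
  apply: colP_eq => j; rewrite !colmul Mt_col colP hAv //.
  congr (_ + _ + _).
    by case: j => [[|j'] hj] //=; rewrite colPn // -ltnS ltnW.
    by rewrite colPn.
  rewrite -[(j.+1 < d.+1)%N]/(j < d)%N.
  by case: ifP => // hj; rewrite colPn.
have DP : dualA Es thst *m P = P *m diag_mx (\row_j thst j).
  apply: col_diag => j; rewrite colP /dualA mulmx_suml.
  under eq_bigr => i _ do rewrite -scalemxAl EsV //.
  rewrite (eq_bigr (fun i : 'I_d.+1 => if (i : nat) == j then thst i *: v j else 0)).
    by rewrite (sum_delta _ _ (fun i => thst i *: v j)) ltn_ord.
  by move=> i _; case: eqP => _; rewrite ?scaler0.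
have EsE : forall i, (i <= d)%N -> Es i = P *m Dl (inord i) *m invmx P.
  by move=> i hi; rewrite -EsP // mulmxK.
have AE : A = P *m Mt d a b c *m invmx P by rewrite -AP mulmxK.
have Mentry : forall i j, (i <= d)%N -> (j <= d)%N ->
    Es i *m A *m Es j != 0 -> Mf a b c i j != 0.
  move=> i j hi hj; rewrite EsE // AE EsE //.
  have -> : P *m Dl (inord i) *m invmx P *m (P *m Mt d a b c *m invmx P) *m
      (P *m Dl (inord j) *m invmx P) =
      P *m (Dl (inord i) *m Mt d a b c *m Dl (inord j)) *m invmx P.
    by rewrite !mulmxA !mulmxKV.
  by rewrite conj0 // Dl_eq0 mxE !inordK.
have bnz : forall i, (i < d)%N -> b i != 0.
  move=> i hi; have := Mentry i i.+1 (ltnW hi) hi (hA1 _ _ (ltnW hi) hi ltac:(lia)).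
  have e1 : (i.+1 == i)%N = false by lia.
  have e2 : (i.+2 == i)%N = false by lia.
  by rewrite /Mf eqxx e1 e2 !addr0.
have cnz : forall i, (i < d)%N -> c i.+1 != 0.
  move=> i hi; have := Mentry i.+1 i hi (ltnW hi) (hA1 _ _ hi (ltnW hi) ltac:(lia)).
  have e1 : (i == i.+2)%N = false by lia.
  have e2 : (i == i.+1)%N = false by lia.
  by rewrite /Mf eqxx e1 e2 !add0r.
pose M := Mt d a b c.
pose U : 'M[F]_d.+1 := \matrix_(i < d.+1, j < d.+1) (upoly a b c i).[theta j].
have colU : forall j : 'I_d.+1, col j U = \col_i (upoly a b c i).[theta j].
  by move=> j; apply/matrixP => i k; rewrite !mxE.
have Minv : invmx P *m A = M *m invmx P by rewrite AE !mulmxA mulVmx // mul1mx.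
have Ueig : forall j : 'I_d.+1, M *m col j U = theta j *: col j U.
  move=> j; have [z hz nz] := right_eig (htheta_eig j (ordle j)).
  have [x xdef] : exists x, x = invmx P *m z by eexists.
  have hx : M *m x = theta j *: x by rewrite xdef mulmxA -Minv -mulmxA hz scalemxAr.
  have hx0 : x (inord 0) 0 != 0.
    apply: contra nz => /eqP x0.
    have x00 : x = 0.
      apply/matrixP => i k; rewrite (ord1 k) mxE.
      have := eig_u hd bnz hx (ordle i); rewrite inord_val => ->.
      by rewrite x0 mul0r.
    by apply/eqP; rewrite -[z](mulKVmx Pu) -xdef x00 mulmx0.
  have -> : col j U = (x (inord 0) 0)^-1 *: x.
    apply/matrixP => i k; rewrite (ord1 k) colU !mxE.
    have := eig_u hd bnz hx (ordle i); rewrite inord_val => ->.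
    by field.
  by rewrite -scalemxAr hx scalerA mulrC -scalerA.
have MU : M *m U = U *m diag_mx (\row_j theta j).
  by apply: col_diag => j; rewrite Ueig.
have [W Wdef] : exists W, W = P *m U by eexists.
have AW : A *m W = W *m diag_mx (\row_j theta j).
  by rewrite Wdef mulmxA AP -mulmxA MU mulmxA.
have EW : forall i, (i <= d)%N -> primIdem A theta i *m W = W *m Dl (inord i).
  move=> i hi; apply: col_diag => j.
  have hw := col_of_diag j AW; rewrite mxE in hw.
  rewrite /primIdem (@prod_act F d d.+1 (col j W) (fun k : 'I_d.+1 => (k : nat) != i) _
      (fun k => (theta i - theta k)^-1 * (theta j - theta k))); last first.
    move=> k _; rewrite -scalemxAl mulmxBl hw mul_scalar_mx -scalerBl scalerA //.
  congr (_ *: _); rewrite eqI //; case: eqP => [ij|nij].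
    rewrite big1 // => k hk; rewrite -ij mulVf // subr_eq0; apply/eqP => e.
    by move: hk; rewrite (htheta_inj _ _ hi (ordle k) e) eqxx.
  rewrite (bigD1 j) /=; first by rewrite subrr mulr0 mul0r.
  by apply/eqP => e; apply: nij.
have Wu : W \in unitmx.
  apply: ker_unit => y hy.
  have hi : forall i : 'I_d.+1, y i 0 = 0.
    move=> i; have := congr1 (fun z => invmx P *m (primIdem A theta i *m z)) hy.
    rewrite /= mulmx0 mulmxA EW // inord_val Wdef -!mulmxA mulKmx //.
    move/(congr1 (fun z : 'cV_d.+1 => z (inord 0) 0)).
    rewrite mulmx0 [RHS]mxE mxE (bigD1 i) //= big1 ?addr0.
      by rewrite /Dl mul_diag_mx !mxE eqxx mul1r inordK // upoly0 hornerC mul1r.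
    by move=> k /negbTE hk; rewrite /Dl mul_diag_mx !mxE hk mul0r mulr0.
  by apply/matrixP => i k; rewrite (ord1 k) hi mxE.
have Uu : U \in unitmx.
  have -> : U = invmx P *m W by rewrite Wdef mulKmx.
  by rewrite unitmx_mul unitmx_inv Pu Wu.
have [N Ndef] : exists N, N = invmx W *m dualA Es thst *m W by eexists.
have EE : forall i, (i <= d)%N -> primIdem A theta i = W *m Dl (inord i) *m invmx W.
  by move=> i hi; rewrite -EW // mulmxK.
have DE : dualA Es thst = W *m N *m invmx W.
  by rewrite Ndef !mulmxA mulmxV // mul1mx mulmxK.
have adj : forall j, (j <= d)%N ->
    (primIdem A theta r *m dualA Es thst *m primIdem A theta j != 0)
    = (N (inord r) (inord j) != 0).
  move=> j hj; rewrite !EE // DE.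
  have -> : W *m Dl (inord r) *m invmx W *m (W *m N *m invmx W) *m
      (W *m Dl (inord j) *m invmx W) =
      W *m (Dl (inord r) *m N *m Dl (inord j)) *m invmx W.
    by rewrite !mulmxA !mulmxKV.
  by rewrite conj0 // Dl_eq0.
have ast : astar A theta Es thst r = N (inord r) (inord r).
  rewrite /astar EE // DE.
  have -> : W *m Dl (inord r) *m invmx W *m (W *m N *m invmx W) =
      W *m (Dl (inord r) *m N) *m invmx W.
    by rewrite !mulmxA !mulmxKV.
  by rewrite conj_tr // tr_Dl.
have DU : diag_mx (\row_j thst j) *m U = U *m N.
  have h : P *m (diag_mx (\row_j thst j) *m U) = P *m (U *m N).
    transitivity (dualA Es thst *m W); first by rewrite Wdef !mulmxA DP.
    by rewrite [RHS]mulmxA -Wdef Ndef !mulmxA mulmxV // mul1mx.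
  by move/(congr1 (mulmx (invmx P))): h; rewrite !mulKmx.
have [K Kdef] : exists K : 'M[F]_d.+1, K = diag_mx (\row_i kseq b c i) by eexists.
have Ku : K \in unitmx.
  rewrite Kdef unitmxE det_diag unitfE; apply/prodf_neq0 => i _.
  by rewrite mxE (kseq_nz bnz cnz).
have MK' : M^T *m K = K *m M by rewrite Kdef; apply: MK.
have [G Gdef] : exists G, G = U^T *m K *m U by eexists.
have GT : diag_mx (\row_j theta j) *m G = G *m diag_mx (\row_j theta j).
  rewrite Gdef !mulmxA -[diag_mx (\row_j theta j)]tr_diag_mx -trmx_mul -MU.
  rewrite trmx_mul tr_diag_mx -[RHS]mulmxA -MU -!mulmxA (mulmxA M^T) MK'.
  by rewrite !mulmxA.
have Gd : forall i j : 'I_d.+1, i != j -> G i j = 0.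
  move=> i j hij; have := congr1 (fun X : 'M[F]_d.+1 => X i j) GT.
  rewrite mul_diag_mx mul_mx_diag !mxE => /eqP; rewrite mulrC -subr_eq0 -mulrBr.
  rewrite mulf_eq0 subr_eq0 => /orP [/eqP //|/eqP e].
  by move: hij; rewrite -(inj_eq val_inj) /= (htheta_inj _ _ (ordle i) (ordle j) e) eqxx.
have Gu : G \in unitmx by rewrite Gdef !unitmx_mul unitmx_tr Uu Ku.
have Gnz : forall i, G i i != 0.
  move=> i; apply/eqP => g0; have := congr1 (fun X : 'M_d.+1 => X i i) (mulmxV Gu).
  rewrite !mxE eqxx big1 /=; first by move/eqP; rewrite eq_sym oner_eq0.
  move=> k _; case: (eqVneq i k) => [<-|hik]; first by rewrite g0 mul0r.
  by rewrite Gd // mul0r.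
have [S Sdef] : exists S, S = U^T *m (K *m diag_mx (\row_j thst j)) *m U by eexists.
have GN : G *m N = S by rewrite Gdef Sdef -!mulmxA -DU.
have KD : (K *m diag_mx (\row_j thst j))^T = K *m diag_mx (\row_j thst j).
  rewrite trmx_mul Kdef !tr_diag_mx; apply/matrixP => i j.
  rewrite mul_diag_mx mul_mx_diag !mxE.
  by case: (eqVneq i j) => [->|h]; rewrite ?mulr0n ?mulr0 ?mul0r // mulrC.
have Ssym : forall i j, S i j = S j i.
  move=> i j; have : S^T = S by rewrite Sdef trmx_mul (trmx_mul U^T) trmxK KD mulmxA.
  by move/(congr1 (fun X : 'M[F]_d.+1 => X j i)); rewrite mxE.
have symN : forall i j : 'I_d.+1, (N i j == 0) = (N j i == 0).
  have GNe : forall i j, G i i * N i j = S i j.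
    move=> i j; rewrite -GN mxE (bigD1 i) //= big1 ?addr0 // => k hk.
    by rewrite Gd ?mul0r // eq_sym.
  move=> i j.
  by rewrite -[LHS]orFb -(negbTE (Gnz i)) -mulf_eq0 GNe Ssym -GNe mulf_eq0 (negbTE (Gnz j)).
have U1 : forall i : 'I_d.+1, U i (inord r) = 1.
  have h1 : M *m (const_mx 1 : 'cV[F]_d.+1) = theta r *: (const_mx 1 : 'cV[F]_d.+1).
    apply/matrixP => i k; rewrite (ord1 k) Mt_row !mxE !mulr1 -(hrow _ (ordle i)).
    have -> : (if (i.+1 < d.+1)%N then b i else 0) = b i.
      case: ifP => // /negbT; rewrite -leqNgt => hi.
      by have -> : (i : nat) = d by have := ordle i; lia.
    case: i => [[|i'] hi] /=; rewrite ?hc_0 ?mxE ?mulr1; ring.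
  move=> i; have := eig_u hd bnz h1 (ordle i); rewrite !mxE inordK //.
  by rewrite mul1r => ->.
have U0 : forall j : 'I_d.+1, U (inord 0) j = 1.
  by move=> j; rewrite mxE inordK // upoly0 hornerC.
have Rne : (inord r : 'I_d.+1) != inord s.
  by rewrite -(inj_eq val_inj) /= !inordK //; apply/eqP => e; apply: hsr.
have Us : forall i, (i <= d)%N -> U (inord i) (inord s) = (upoly a b c i).[theta s].
  by move=> i hi; rewrite mxE !inordK.
clearbody U.
have colr : forall i : 'I_d.+1, thst i = \sum_k U i k * N k (inord r).
  move=> i; have := congr1 (fun X : 'M_d.+1 => X i (inord r)) DU.
  by rewrite mul_diag_mx !mxE U1 mulr1 => ->.
have col2 : forall i : 'I_d.+1,
    (forall k : 'I_d.+1, k != inord r -> k != inord s -> N k (inord r) = 0) ->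
    thst i = N (inord r) (inord r) + U i (inord s) * N (inord s) (inord r).
  move=> i h0; rewrite colr (bigD1 (inord r)) //= (bigD1 (inord s)) /=; last by rewrite eq_sym Rne.
  rewrite big1 ?addr0 ?U1 ?mul1r // => k /andP [h1 h2].
  by rewrite h0 ?mulr0.
have ieq : forall x y, (x <= d)%N -> (y <= d)%N ->
    (inord x == inord y :> 'I_d.+1) = (x == y).
  by move=> x y hx hy; rewrite -(inj_eq val_inj) /= !inordK.
split.
- move=> H.
  have NrS : N (inord r) (inord s) != 0.
    by rewrite -adj //; have [_ h] := proj2 (H s hs) erefl; apply/eqP.
  have N0 : forall k : 'I_d.+1, k != inord r -> k != inord s -> N k (inord r) = 0.
    move=> k h1 h2; apply/eqP; rewrite -symN.
    rewrite -[k]inord_val ieq ?ordle // in h1.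
    rewrite -[k]inord_val ieq ?ordle // in h2.
    apply/negPn/negP => h; move/eqP: h2; apply; apply/(H k (ordle k)); split.
      by move=> e; move: h1; rewrite e eqxx.
    by apply/eqP; rewrite adj ?ordle // inord_val.
  have NSR : N (inord s) (inord r) != 0 by rewrite symN.
  have c0 := col2 (inord 0) N0; rewrite U0 mul1r inordK // in c0.
  rewrite ast; split.
    move=> e; move: NSR.
    have -> : N (inord s) (inord r) = thst 0%N - N (inord r) (inord r) by rewrite c0; ring.
    by rewrite e subrr eqxx.
  move=> i hi; have ci := col2 (inord i) N0; rewrite Us // inordK // in ci.
  rewrite ci c0; field.
  by rewrite (_ : _ + _ - _ = N (inord s) (inord r)) //; ring.
- rewrite ast => -[hne hu].
  have anz : thst 0%N - N (inord r) (inord r) != 0.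
    by rewrite subr_eq0 eq_sym; apply/eqP.
  pose Z : 'cV[F]_d.+1 := \col_k (N k (inord r)
      - (if k == inord r then N (inord r) (inord r) else 0)
      - (if k == inord s then thst 0%N - N (inord r) (inord r) else 0)).
  have UZ : U *m Z = 0.
    apply/matrixP => i k; rewrite (ord1 k) !mxE.
    under eq_bigr => j _ do rewrite mxE mulrBr mulrBr.
    rewrite !sumrB -colr.
    rewrite (eq_bigr (fun j => if j == inord r then U i j * N (inord r) (inord r) else 0));
      last by move=> j _; case: eqP; rewrite ?mulr0.
    rewrite sumo_delta_mul sumo_delta U1 -[i in U i (inord s)]inord_val Us ?ordle // hu ?ordle //.
    by field.
  have Z0 : Z = 0 by rewrite -[Z](mulKmx Uu) UZ mulmx0.
  have NjR : forall k, N k (inord r) =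
      (if k == inord r then N (inord r) (inord r) else 0)
      + (if k == inord s then thst 0%N - N (inord r) (inord r) else 0).
    move=> k; have := congr1 (fun z : 'cV_d.+1 => z k 0) Z0; rewrite !mxE => e.
    by apply/eqP; rewrite -subr_eq0 opprD addrA; apply/eqP.
  move=> j hj; split.
  + move=> [hrj hne0]; apply/eqP; apply/negP => hjs.
    have : N (inord r) (inord j) != 0 by rewrite -adj //; apply/eqP.
    have hjr : (j == r) = false by apply/eqP => e; apply: hrj; rewrite e.
    have hjs' : (j == s) = false by apply/negbTE/negP.
    by rewrite symN NjR !ieq // hjs' hjr addr0 eqxx.
  + move=> ->; split; first by move=> e; apply: hsr.
    apply/eqP; rewrite adj // symN NjR !ieq // eqxx.
    by rewrite (_ : (s == r) = false) ?add0r //; apply/eqP.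
Qed.
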